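(* Let $\mathcal{A}$ and $\mathcal{B}$ be hyperplane arrangements in a finite-dimensional $\mathbb{K}$-vector space $V$. Let $\varnothing\neq S\subseteq\mathcal{A}$ and $\varnothing\neq T\subseteq\mathcal{B}$ with $\langle S\rangle_{\mathcal{A}}=\mathcal{A}$ and $\langle T\rangle_{\mathcal{B}}=\mathcal{B}$. Suppose $\psi:L(\mathcal{A})\to L(\mathcal{B})$ is a poset isomorphism and $\varphi\in\mathrm{GL}(V)$ satisfy $\psi(S)=\varphi(S)=T$ and $\psi(H)=\varphi(H)$ for all $H\in S$. Then $\varphi(\mathcal{A})=\mathcal{B}$, i.e. $\{\varphi(H)\mid H\in\mathcal{A}\}=\mathcal{B}$.
   Context: For an arrangement $\mathcal{A}$, $L(\mathcal{A})$ is the set of all intersections of subsets of $\mathcal{A}$, ordered by reverse inclusion. For $\varnothing\neq S\subseteq\mathcal{A}$ set $\mathrm{Gen}_0(\mathcal{A},S):=S$ and inductively $\mathrm{Gen}_{i+1}(\mathcal{A},S):=\{H\in\mathcal{A}\mid \exists\, J\subseteq L(\mathrm{Gen}_i(\mathcal{A},S)) \text{ with } H=\sum_{X\in J}X\}$ (sum of subspaces). The subarrangement generated by $S$ is $\langle S\rangle_{\mathcal{A}}:=\bigcup_{i\ge0}\mathrm{Gen}_i(\mathcal{A},S)$; $S$ generates $\mathcal{A}$ if $\langle S\rangle_{\mathcal{A}}=\mathcal{A}$. *)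

(* Defs.v *)
From HB Require Import structures.
From mathcomp Require Import all_boot all_algebra.
From mathcomp Require Import finmap.
Set Implicit Arguments. Unset Strict Implicit. Unset Printing Implicit Defensive.
Import GRing.Theory.
Local Open Scope ring_scope.
Local Open Scope fset_scope.

Section Arr.
Variables (K : fieldType) (V : vectType K).

Definition is_hyperplane (H : {vspace V}) : Prop := (\dim H).+1 = \dim {:V}.

Definition is_arrangement (A : {fset {vspace V}}) : Prop :=
  forall H, H \in A -> is_hyperplane H.

Definition Lat (P : {vspace V} -> Prop) (X : {vspace V}) : Prop :=
  exists B : seq {vspace V}, (forall H, H \in B -> P H) /\ X = (\bigcap_(H <- B) H)%VS.

Definition LA (A : {fset {vspace V}}) : {vspace V} -> Prop := Lat (fun H => H \in A).

Fixpoint Gen (A S : {fset {vspace V}}) (i : nat) : {vspace V} -> Prop :=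
  match i with
  | 0 => fun H => H \in S
  | i'.+1 => fun H => H \in A /\
      exists J : seq {vspace V}, (forall X, X \in J -> Lat (Gen A S i') X)
                                 /\ H = (\sum_(X <- J) X)%VS
  end.

Definition generated (A S : {fset {vspace V}}) (H : {vspace V}) : Prop :=
  exists i, Gen A S i H.

Definition generates (A S : {fset {vspace V}}) : Prop :=
  forall H, generated A S H <-> H \in A.

Definition lattice_iso (A B : {fset {vspace V}}) (psi : {vspace V} -> {vspace V}) : Prop :=
  [/\ forall X, LA A X -> LA B (psi X),
      forall Y, LA B Y -> exists2 X, LA A X & psi X = Y,
      forall X Y, LA A X -> LA A Y -> ((psi Y <= psi X)%VS = (Y <= X)%VS) &
      forall X Y, LA A X -> LA A Y -> psi X = psi Y -> X = Y].

End Arr.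

(* Main.v *)
Require Import Defs.
From HB Require Import structures.
From mathcomp Require Import all_boot all_algebra.
From mathcomp Require Import finmap.
Local Open Scope ring_scope.
Local Open Scope fset_scope.

Local Close Scope ring_scope.
Set Implicit Arguments. Unset Strict Implicit.
Section Aux.
Variables (K : fieldType) (V : vectType K).
Implicit Types (U W : {vspace V}).

Lemma bigcap_inf (l : seq {vspace V}) G : G \in l -> ((\bigcap_(H <- l) H) <= G)%VS.
Proof.
elim: l => [//|a l IH]; rewrite inE big_cons => /orP[/eqP->|Gl].
  exact: capvSl.
exact: subv_trans (capvSr _ _) (IH Gl).
Qed.

Lemma bigcap_glb (l : seq {vspace V}) U :
  (forall G, G \in l -> (U <= G)%VS) -> (U <= \bigcap_(H <- l) H)%VS.
Proof.
elim: l => [|a l IH] h; first by rewrite big_nil subvf.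
rewrite big_cons subv_cap h ?inE ?eqxx //=. apply: IH => G Gl. by apply: h; rewrite inE Gl orbT.
Qed.

Lemma bigcap_map (f : {vspace V} -> {vspace V}) (l : seq {vspace V}) :
  (\bigcap_(H <- l) f H)%VS = (\bigcap_(G <- map f l) G)%VS.
Proof. by rewrite big_map. Qed.

Lemma limg_bigsum (phi : 'End(V)) (J : seq {vspace V}) :
  (phi @: (\sum_(X <- J) X))%VS = (\sum_(X <- J) phi @: X)%VS.
Proof. exact: limg_sum. Qed.

Lemma subv_eq_dim U W : (U <= W)%VS -> \dim W <= \dim U -> U = W.
Proof. by move=> h1 h2; apply/eqP; rewrite eqEdim h1 h2. Qed.

Variables (A B : {fset {vspace V}}) (psi : {vspace V} -> {vspace V}) (phi : 'End(V)).
Hypotheses (hA : is_arrangement A) (hB : is_arrangement B)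
  (hpsi : lattice_iso A B psi) (hker : lker phi = 0%VS).

Lemma LA_full (C : {fset {vspace V}}) : LA C fullv.
Proof. by exists [::]; rewrite big_nil. Qed.

Lemma LA_one (C : {fset {vspace V}}) H : H \in C -> LA C H.
Proof. by move=> HC; exists [:: H]; split; [move=> G; rewrite inE => /eqP->| rewrite big_seq1]. Qed.

Lemma psi_full : psi fullv = fullv.
Proof.
case: hpsi => _ sur mono _.
have [Z LZ eZ] := sur _ (LA_full B).
have : (psi Z <= psi fullv)%VS by rewrite mono ?subvf //; exact: LA_full.
by rewrite eZ => h; apply/eqP; rewrite eqEsubv subvf h.
Qed.

Lemma dim_phi U : \dim (phi @: U) = \dim U.
Proof. by apply: limg_dim_eq; rewrite hker capv0. Qed.

Lemma hyp_in (C : {fset {vspace V}}) Y : is_arrangement C -> LA C Y ->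
  (\dim Y).+1 = \dim (fullv : {vspace V}) -> Y \in C.
Proof.
move=> hC [[|G l] [inl ->]] hd.
  by move: hd; rewrite big_nil => /eqP; rewrite -{2}[\dim _]addn0 -addn1 eqn_add2l.
have GC : G \in C by apply: inl; rewrite inE eqxx.
have sub : ((\bigcap_(H <- G :: l) H) <= G)%VS by apply: bigcap_inf; rewrite inE eqxx.
have -> : (\bigcap_(H <- G :: l) H)%VS = G; last by [].
apply: subv_eq_dim sub _.
by have := hC _ GC; rewrite /is_hyperplane -hd => -[->].
Qed.

Lemma step_hyp H : H \in A -> (phi @: H <= psi H)%VS -> psi H = (phi @: H)%VS /\ psi H \in B.
Proof.
move=> HA sub.
case: hpsi => inLB _ mono inj.
have hH := hA HA; rewrite /is_hyperplane in hH.
have dle : \dim (psi H) < \dim (fullv : {vspace V}).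
  rewrite ltn_neqAle dimvS ?subvf // andbT.
  apply/negP => /eqP de.
  have pf : psi H = fullv by apply: subv_eq_dim; rewrite ?subvf ?de.
  have : H = fullv by apply: inj; [exact: LA_one | exact: LA_full | rewrite pf psi_full].
  by move=> eH; move: hH; rewrite eH => /eqP; rewrite -{2}[\dim _]addn0 -addn1 eqn_add2l.
have e : psi H = (phi @: H)%VS.
  apply/esym/subv_eq_dim => //; rewrite dim_phi.
  by rewrite -ltnS hH.
split=> //; apply: hyp_in hB (inLB _ (LA_one HA)) _.
by rewrite e dim_phi hH.
Qed.

Lemma step_lat (l : seq {vspace V}) :
  (forall H, H \in l -> H \in A /\ (phi @: H <= psi H)%VS) ->
  LA A (\bigcap_(H <- l) H) /\
  (phi @: (\bigcap_(H <- l) H) <= psi (\bigcap_(H <- l) H))%VS.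
Proof.
move=> hl.
case: hpsi => inLB sur mono inj.
have LX : LA A (\bigcap_(H <- l) H) by exists l; split=> // H /hl[].
split=> //.
have LY : LA B (\bigcap_(G <- map psi l) G).
  exists (map psi l); split=> // G /mapP[H Hl ->].
  by have [HA s] := hl _ Hl; have [_ ] := step_hyp HA s.
have [Z LZ eZ] := sur _ LY.
have ZX : (Z <= \bigcap_(H <- l) H)%VS.
  apply: (@bigcap_glb l Z) => H Hl; have [HA _] := hl _ Hl.
  rewrite -mono //; last exact: LA_one.
  by rewrite eZ; apply: bigcap_inf; apply: map_f.
apply: subv_trans (_ : (phi @: _ <= psi Z)%VS) _; last by rewrite mono.
rewrite eZ; apply: bigcap_glb => _ /mapP[H Hl ->].
have [HA s] := hl _ Hl.
apply: subv_trans s; apply: limgS; exact: bigcap_inf.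
Qed.

Lemma sum_sup (J : seq {vspace V}) X : X \in J -> (X <= \sum_(Y <- J) Y)%VS.
Proof.
elim: J => [//|a J IH]; rewrite inE big_cons => /orP[/eqP->|XJ].
  exact: addvSl.
exact: subv_trans (IH XJ) (addvSr _ _).
Qed.

Lemma sum_lub (J : seq {vspace V}) (F : {vspace V} -> {vspace V}) W :
  (forall X, X \in J -> (F X <= W)%VS) -> (\sum_(X <- J) F X <= W)%VS.
Proof.
elim: J => [|a J IH] h; first by rewrite big_nil sub0v.
rewrite big_cons subv_add h ?inE ?eqxx //=; apply: IH => G Gl.
by apply: h; rewrite inE Gl orbT.
Qed.

Lemma Gen_ok (S : {fset {vspace V}}) : S `<=` A ->
  (forall H, H \in S -> psi H = (phi @: H)%VS) -> forall i H, Gen A S i H ->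
  H \in A /\ (phi @: H <= psi H)%VS.
Proof.
move=> SA hS; elim=> [|i IH] H /=.
  move=> HS; have HA : H \in A by apply: (fsubsetP SA).
  by split=> //; rewrite hS // subvv.
move=> [HA [J [hJ eH]]]; split=> //.
case: hpsi => _ _ mono _.
rewrite {1}eH limg_sum; apply: sum_lub => X XJ.
have [l [hl eX]] := hJ _ XJ.
have [LX sX] : LA A X /\ (phi @: X <= psi X)%VS.
  by rewrite eX; apply: step_lat => G /hl /IH.
apply: subv_trans sX _; rewrite (mono _ _ (LA_one HA) LX).
by rewrite eH; apply: sum_sup.
Qed.


End Aux.

Local Open Scope ring_scope.

Theorem mainTheorem2 (K : fieldType) (V : vectType K)
    (A B S T : {fset {vspace V}})
    (psi : {vspace V} -> {vspace V}) (phi : 'End(V)) :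
  is_arrangement A -> is_arrangement B ->
  S != fset0 -> S `<=` A -> T != fset0 -> T `<=` B ->
  generates A S -> generates B T ->
  lattice_iso A B psi ->
  lker phi = 0%VS ->
  [fset psi H | H in S] = T ->
  [fset (phi @: H)%VS | H in S] = T ->
  (forall H, H \in S -> psi H = (phi @: H)%VS) ->
  [fset (phi @: H)%VS | H in A] = B.
Proof.
move=> hA hB _ SA _ _ gA _ hpsi hker _ _ hS.
have key : forall H, H \in A -> psi H = (phi @: H)%VS /\ psi H \in B.
  move=> H HA; have [i Hi] := (gA H).2 HA.
  have [_ s] := Gen_ok hA hB hpsi hker SA hS Hi.
  exact: (step_hyp hA hB hpsi hker HA s).
apply/fsetP=> G; apply/imfsetP/idP.
  by move=> [H /= HA ->]; have [<- ] := key H HA.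
move=> GB.
case: (hpsi) => _ sur mono _.
have [Z LZ eZ] := sur _ (LA_one GB).
have LZ' := LZ; move: LZ' => [[|H l] [hl eZl]].
  move: eZ; rewrite eZl big_nil (psi_full hpsi) => eG.
  have := hB _ GB; rewrite /is_hyperplane -eG => /eqP.
  by rewrite -{2}[\dim _]addn0 -addn1 eqn_add2l.
have HA : H \in A by apply: hl; rewrite inE eqxx.
have [e1 e2] := key H HA.
exists H => //=; rewrite -e1.
have sub : (G <= psi H)%VS.
  rewrite -eZ (mono _ _ (LA_one HA) LZ).
  by rewrite eZl; apply: bigcap_inf; rewrite inE eqxx.
apply: subv_eq_dim sub _.
have h1 := hB _ e2; have h2 := hB _ GB; rewrite /is_hyperplane in h1 h2.
have : (\dim (psi H)).+1 = (\dim G).+1 by rewrite h1 h2.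
by case=> ->.
Qed.
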